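(* Let $\mathcal{L}$ be a finite-dimensional complex filiform Lie algebra with $\dim\mathcal{L}\ge 3$. Then $\mathcal{L}$ admits a local automorphism which is not an automorphism.
   Context: For a Lie algebra $\mathcal{L}$ set $\mathcal{L}^0=\mathcal{L}$, $\mathcal{L}^k=[\mathcal{L}^{k-1},\mathcal{L}]$. $\mathcal{L}$ is nilpotent if $\mathcal{L}^k=\{0\}$ for some $k$; a nilpotent Lie algebra of dimension $n$ is filiform if $\dim\mathcal{L}^k=n-k-1$ for $1\le k\le n-1$. An automorphism is an invertible linear map $\Phi$ with $\Phi([x,y])=[\Phi(x),\Phi(y)]$; a linear map $\Delta$ is a local automorphism if for every $x\in\mathcal{L}$ there is an automorphism $\Phi_x$ with $\Phi_x(x)=\Delta(x)$. *)

(* Defs.v *)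
From HB Require Import structures.
From mathcomp Require Import all_boot all_order all_algebra.
Set Implicit Arguments. Unset Strict Implicit. Unset Printing Implicit Defensive.
Import GRing.Theory Num.Theory.
Local Open Scope ring_scope.

Definition is_lie_bracket (F : fieldType) (n : nat)
    (br : 'rV[F]_n -> 'rV[F]_n -> 'rV[F]_n) : Prop :=
  [/\ (forall (a : F) x y z, br (a *: x + y) z = a *: br x z + br y z),
      (forall (a : F) x y z, br z (a *: x + y) = a *: br z x + br z y),
      (forall x, br x x = 0) &
      (forall x y z, br x (br y z) + br y (br z x) + br z (br x y) = 0)].

(* [A, L]: the subspace spanned by all brackets [u, v], u in the row space of A,
   v in L (spanned by brackets of generators, by bilinearity). *)
Definition bracket_with_L (F : fieldType) (n : nat)
    (br : 'rV[F]_n -> 'rV[F]_n -> 'rV[F]_n) (A : 'M[F]_n) : 'M[F]_n :=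
  (\sum_(i < n) \sum_(j < n) <<br (row i A) (delta_mx 0 j)>>)%MS.

Definition lcs (F : fieldType) (n : nat)
    (br : 'rV[F]_n -> 'rV[F]_n -> 'rV[F]_n) (k : nat) : 'M[F]_n :=
  iter k (bracket_with_L br) 1%:M.

Definition nilpotent_lie (F : fieldType) (n : nat)
    (br : 'rV[F]_n -> 'rV[F]_n -> 'rV[F]_n) : Prop :=
  exists k, \rank (lcs br k) = 0%N.

Definition filiform (F : fieldType) (n : nat)
    (br : 'rV[F]_n -> 'rV[F]_n -> 'rV[F]_n) : Prop :=
  nilpotent_lie br /\
  forall k : nat, (1 <= k <= n.-1)%N -> \rank (lcs br k) = (n - k - 1)%N.

(* Linear maps are matrices acting on the right: x |-> x *m P. *)
Definition lie_automorphism (F : fieldType) (n : nat)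
    (br : 'rV[F]_n -> 'rV[F]_n -> 'rV[F]_n) (P : 'M[F]_n) : Prop :=
  P \in unitmx /\ forall x y, br x y *m P = br (x *m P) (y *m P).

Definition local_automorphism (F : fieldType) (n : nat)
    (br : 'rV[F]_n -> 'rV[F]_n -> 'rV[F]_n) (D : 'M[F]_n) : Prop :=
  forall x : 'rV[F]_n, exists P : 'M[F]_n, lie_automorphism br P /\ x *m P = x *m D.

(* Main.v *)
Require Import Defs.
From HB Require Import structures.
From mathcomp Require Import all_boot all_order all_algebra.
Set Implicit Arguments. Unset Strict Implicit. Unset Printing Implicit Defensive.
Import GRing.Theory Num.Theory.
Local Open Scope ring_scope.

Lemma lin0 (F : fieldType) (n m : nat) (f : 'rV[F]_n -> 'rV[F]_m)
  (fD : forall a x y, f (a *: x + y) = a *: f x + f y) : f 0 = 0.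
Proof.
have h := fD 1 0 0; rewrite !scale1r addr0 in h.
by apply: (@addrI _ (f 0)); rewrite addr0 -h.
Qed.

Lemma linD (F : fieldType) (n m : nat) (f : 'rV[F]_n -> 'rV[F]_m)
  (fD : forall a x y, f (a *: x + y) = a *: f x + f y) x y : f (x + y) = f x + f y.
Proof. by have := fD 1 x y; rewrite !scale1r. Qed.

Lemma linZ (F : fieldType) (n m : nat) (f : 'rV[F]_n -> 'rV[F]_m)
  (fD : forall a x y, f (a *: x + y) = a *: f x + f y) a x : f (a *: x) = a *: f x.
Proof. by have := fD a x 0; rewrite addr0 (lin0 fD) addr0. Qed.

Lemma linN (F : fieldType) (n m : nat) (f : 'rV[F]_n -> 'rV[F]_m)
  (fD : forall a x y, f (a *: x + y) = a *: f x + f y) x : f (- x) = - f x.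
Proof. by rewrite -scaleN1r (linZ fD) scaleN1r. Qed.

Lemma lin_mx (F : fieldType) (n m : nat) (f : 'rV[F]_n -> 'rV[F]_m)
  (fD : forall a x y, f (a *: x + y) = a *: f x + f y) x :
  x *m (\matrix_(j < n) f (delta_mx 0 j)) = f x.
Proof.
rewrite mulmx_sum_row {2}(row_sum_delta x).
rewrite (big_morph f (linD fD) (lin0 fD)).
by apply: eq_bigr => j _; rewrite rowK (linZ fD).
Qed.

Section dummy. End dummy.
Lemma brDl (F : fieldType) (n : nat) (br : 'rV[F]_n -> 'rV[F]_n -> 'rV[F]_n)
  (H : is_lie_bracket br) z : forall a x y, br (a *: x + y) z = a *: br x z + br y z.
Proof. by case: H => h _ _ _ a x y; apply: h. Qed.

Lemma brDr (F : fieldType) (n : nat) (br : 'rV[F]_n -> 'rV[F]_n -> 'rV[F]_n)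
  (H : is_lie_bracket br) z : forall a x y, br z (a *: x + y) = a *: br z x + br z y.
Proof. by case: H => _ h _ _ a x y; apply: h. Qed.

Lemma brAl (F : fieldType) (n : nat) (br : 'rV[F]_n -> 'rV[F]_n -> 'rV[F]_n)
  (H : is_lie_bracket br) x y z : br (x + y) z = br x z + br y z.
Proof. exact: (linD (f := br^~ z) (brDl H z)). Qed.
Lemma brAr (F : fieldType) (n : nat) (br : 'rV[F]_n -> 'rV[F]_n -> 'rV[F]_n)
  (H : is_lie_bracket br) x y z : br z (x + y) = br z x + br z y.
Proof. exact: (linD (f := br z) (brDr H z)). Qed.
Lemma brZl (F : fieldType) (n : nat) (br : 'rV[F]_n -> 'rV[F]_n -> 'rV[F]_n)
  (H : is_lie_bracket br) a x z : br (a *: x) z = a *: br x z.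
Proof. exact: (linZ (f := br^~ z) (brDl H z)). Qed.
Lemma brZr (F : fieldType) (n : nat) (br : 'rV[F]_n -> 'rV[F]_n -> 'rV[F]_n)
  (H : is_lie_bracket br) a x z : br z (a *: x) = a *: br z x.
Proof. exact: (linZ (f := br z) (brDr H z)). Qed.
Lemma br0l (F : fieldType) (n : nat) (br : 'rV[F]_n -> 'rV[F]_n -> 'rV[F]_n)
  (H : is_lie_bracket br) z : br 0 z = 0.
Proof. exact: (lin0 (f := br^~ z) (brDl H z)). Qed.
Lemma br0r (F : fieldType) (n : nat) (br : 'rV[F]_n -> 'rV[F]_n -> 'rV[F]_n)
  (H : is_lie_bracket br) z : br z 0 = 0.
Proof. exact: (lin0 (f := br z) (brDr H z)). Qed.
Lemma brNl (F : fieldType) (n : nat) (br : 'rV[F]_n -> 'rV[F]_n -> 'rV[F]_n)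
  (H : is_lie_bracket br) x z : br (- x) z = - br x z.
Proof. exact: (linN (f := br^~ z) (brDl H z)). Qed.
Lemma brNr (F : fieldType) (n : nat) (br : 'rV[F]_n -> 'rV[F]_n -> 'rV[F]_n)
  (H : is_lie_bracket br) x z : br z (- x) = - br z x.
Proof. exact: (linN (f := br z) (brDr H z)). Qed.

Lemma br_anti (F : fieldType) (n : nat) (br : 'rV[F]_n -> 'rV[F]_n -> 'rV[F]_n)
  (H : is_lie_bracket br) x y : br y x = - br x y.
Proof.
have [_ _ h0 _] := H.
have := h0 (x + y).
rewrite (brAl H) !(brAr H) !h0 add0r addr0 => /eqP.
by rewrite addr_eq0 => /eqP ->; rewrite opprK.
Qed.

Lemma br_sub (F : fieldType) (n : nat) (br : 'rV[F]_n -> 'rV[F]_n -> 'rV[F]_n)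
  (H : is_lie_bracket br) (A : 'M[F]_n) u v :
  (u <= A)%MS -> (br u v <= bracket_with_L br A)%MS.
Proof.
case/submxP=> D ->.
rewrite -(lin_mx (f := br^~ v) (brDl H v)) -mulmxA; apply: submx_trans (submxMl _ _) _.
apply/row_subP=> i; rewrite row_mul (lin_mx (f := br^~ v) (brDl H v)) -(lin_mx (f := br _) (brDr H _)).
apply: submx_trans (submxMl _ _) _.
apply/row_subP=> j; rewrite rowK.
apply: (sumsmx_sup i) => //; apply: (sumsmx_sup j) => //.
by rewrite genmxE.
Qed.

Lemma bracket_le (F : fieldType) (n : nat) (br : 'rV[F]_n -> 'rV[F]_n -> 'rV[F]_n)
  (A S : 'M[F]_n) :
  (forall i j, (br (row i A) (delta_mx 0 j) <= S)%MS) -> (bracket_with_L br A <= S)%MS.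
Proof.
move=> h; apply/sumsmx_subP=> i _; apply/sumsmx_subP=> j _.
by rewrite genmxE.
Qed.

Lemma lcsS (F : fieldType) (n : nat) (br : 'rV[F]_n -> 'rV[F]_n -> 'rV[F]_n) k :
  lcs br k.+1 = bracket_with_L br (lcs br k).
Proof. by []. Qed.

Lemma lcs_decr (F : fieldType) (n : nat) (br : 'rV[F]_n -> 'rV[F]_n -> 'rV[F]_n)
  (H : is_lie_bracket br) k : (lcs br k.+1 <= lcs br k)%MS.
Proof.
elim: k => [|k IH]; first by rewrite submx1.
rewrite lcsS; apply: bracket_le => i j; apply: br_sub => //.
by apply: submx_trans IH; apply: row_sub.
Qed.

Lemma lcs_mono (F : fieldType) (n : nat) (br : 'rV[F]_n -> 'rV[F]_n -> 'rV[F]_n)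
  (H : is_lie_bracket br) k m : (k <= m)%N -> (lcs br m <= lcs br k)%MS.
Proof.
move=> /subnK <-; elim: (m - k)%N => [|d IH].
  by rewrite add0n submx_refl.
rewrite addSn; apply: submx_trans IH; exact: lcs_decr.
Qed.

Lemma br_subr (F : fieldType) (n : nat) (br : 'rV[F]_n -> 'rV[F]_n -> 'rV[F]_n)
  (H : is_lie_bracket br) (A : 'M[F]_n) u v :
  (u <= A)%MS -> (br v u <= bracket_with_L br A)%MS.
Proof. by move=> h; rewrite (br_anti H) eqmx_opp br_sub. Qed.

Lemma functional (F : fieldType) (n : nat) (S : 'M[F]_n) (x : 'rV[F]_n) :
  ~~ (x <= S)%MS -> exists c : 'cV[F]_n, S *m c = 0 /\ x *m c = 1%:M.
Proof.
rewrite submxE; have hK : S *m cokermx S = 0 := mulmx_coker S.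
set K := cokermx S in hK *; clearbody K => hx.
case: (pickP (fun j => (x *m K) 0 j != 0)) => [j hj|h0]; last first.
  case/negP: hx; apply/eqP/matrixP=> i k.
  by rewrite [i]ord1 [RHS]mxE; have := h0 k; rewrite /= => /negbFE/eqP.
exists (((x *m K) 0 j)^-1 *: (K *m delta_mx j 0)); split.
  by rewrite -scalemxAr mulmxA hK mul0mx scaler0.
rewrite -scalemxAr mulmxA -colE; apply/matrixP=> i k; rewrite !ord1 mxE.
rewrite [X in _ * X]mxE [X in _ = X]mxE /= mulVf //.
Qed.

Lemma vanish_sub (F : fieldType) (n m : nat) (S : 'M[F]_n) (c : 'M[F]_(n, m)) (y : 'rV[F]_n) :
  S *m c = 0 -> (y <= S)%MS -> y *m c = 0.
Proof. by move=> hS /submxP [D ->]; rewrite -mulmxA hS mulmx0. Qed.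

Lemma rank_add1 (F : fieldType) (n : nat) (S : 'M[F]_n) (x : 'rV[F]_n) :
  ~~ (x <= S)%MS -> \rank (S + x)%MS = (\rank S).+1.
Proof.
move=> hx.
have x0 : x != 0 by apply: contraNneq hx => ->; rewrite sub0mx.
have hc : \rank (S :&: x)%MS = 0%N.
  have := mxrank_leqif_sup (capmxSr S x); rewrite rank_rV x0 /= => -[h1 h2].
  apply/eqP; rewrite -leqn0 -ltnS; rewrite ltn_neqAle h1 andbT h2.
  by apply: contra hx => h; apply: submx_trans h (capmxSl _ _).
have := mxrank_sum_cap S x; rewrite hc addn0 rank_rV x0 => ->.
by rewrite addn1.
Qed.

Lemma exists_e (F : fieldType) (n : nat) (S : 'M[F]_n) :
  (\rank S < n)%N -> exists j, ~~ ((delta_mx 0 j : 'rV[F]_n) <= S)%MS.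
Proof.
move=> hr; case: (pickP (fun j => ~~ ((delta_mx 0 j : 'rV[F]_n) <= S)%MS)) => [j hj|h0].
  by exists j.
have : (1%:M <= S)%MS.
  by apply/row_subP=> i; rewrite row1; have := h0 i => /negbFE.
by move/mxrankS; rewrite mxrank1 leqNgt hr.
Qed.

Lemma unit_of_inj (F : fieldType) (n : nat) (P : 'M[F]_n) :
  (forall x : 'rV[F]_n, x *m P = 0 -> x = 0) -> P \in unitmx.
Proof.
move=> h; rewrite -row_free_unit -kermx_eq0; apply/eqP/row_matrixP=> i.
by rewrite row0; apply: h; rewrite -row_mul mulmx_ker row0.
Qed.

Lemma mul_rank1 (F : fieldType) (n : nat) (x : 'rV[F]_n) (c : 'cV[F]_n) (w : 'rV[F]_n) :
  x *m (c *m w) = (x *m c) 0 0 *: w.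
Proof. by rewrite mulmxA {1}[x *m c]mx11_scalar mul_scalar_mx. Qed.

Lemma bil_vanish (F : fieldType) (n m : nat) (G : 'rV[F]_n -> 'rV[F]_n -> 'rV[F]_m)
  (V : 'M[F]_n) (e0 e1 : 'rV[F]_n) :
  (forall z a x y, G (a *: x + y) z = a *: G x z + G y z) ->
  (forall z a x y, G z (a *: x + y) = a *: G z x + G z y) ->
  (forall v y, (v <= V)%MS -> G v y = 0) ->
  (forall v y, (v <= V)%MS -> G y v = 0) ->
  G e0 e0 = 0 -> G e0 e1 = 0 -> G e1 e0 = 0 -> G e1 e1 = 0 ->
  (forall x, exists v a b, (v <= V)%MS /\ x = v + a *: e0 + b *: e1) ->
  forall x y, G x y = 0.
Proof.
move=> hl hr hvl hvr h00 h01 h10 h11 hdec x y.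
have [v [a [b [hv ->]]]] := hdec x.
have [v' [a' [b' [hv' ->]]]] := hdec y.
rewrite !(linD (f := G^~ _) (hl _)) !(linZ (f := G^~ _) (hl _)) (hvl _ _ hv).
have hR z : G z (v' + a' *: e0 + b' *: e1) = G z v' + a' *: G z e0 + b' *: G z e1.
  by rewrite !(linD (f := G z) (hr z)) !(linZ (f := G z) (hr z)).
rewrite !hR !(hvr _ _ hv') h00 h01 h10 h11.
by rewrite !scaler0 !add0r !scaler0 addr0.
Qed.

Definition bilin (F : fieldType) (n m : nat) (G : 'rV[F]_n -> 'rV[F]_n -> 'rV[F]_m) :=
  (forall z a x y, G (a *: x + y) z = a *: G x z + G y z) /\
  (forall z a x y, G z (a *: x + y) = a *: G z x + G z y).

Definition fnl (F : fieldType) (n : nat) (c : 'cV[F]_n) (x : 'rV[F]_n) : F := (x *m c) 0 0.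

Lemma fnlD (F : fieldType) (n : nat) (c : 'cV[F]_n) a x y :
  fnl c (a *: x + y) = a * fnl c x + fnl c y.
Proof. by rewrite /fnl mulmxDl -scalemxAl !mxE. Qed.

Lemma fnlA (F : fieldType) (n : nat) (c : 'cV[F]_n) x y : fnl c (x + y) = fnl c x + fnl c y.
Proof. by have := fnlD c 1 x y; rewrite scale1r mul1r. Qed.

Lemma fnlZ (F : fieldType) (n : nat) (c : 'cV[F]_n) a x : fnl c (a *: x) = a * fnl c x.
Proof. by rewrite /fnl -scalemxAl mxE. Qed.

Lemma fnl_sub (F : fieldType) (n : nat) (c : 'cV[F]_n) (S : 'M[F]_n) x :
  S *m c = 0 -> (x <= S)%MS -> fnl c x = 0.
Proof. by move=> hS hx; rewrite /fnl (vanish_sub hS hx) mxE. Qed.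

Lemma mul_rank1' (F : fieldType) (n : nat) (x : 'rV[F]_n) (c : 'cV[F]_n) (w : 'rV[F]_n) :
  x *m (c *m w) = fnl c x *: w.
Proof. exact: mul_rank1. Qed.

Lemma bilin_fg (F : fieldType) (n : nat) (c : 'cV[F]_n) (g : 'rV[F]_n -> 'rV[F]_n) :
  (forall a x y, g (a *: x + y) = a *: g x + g y) ->
  bilin (fun x y => fnl c x *: g y).
Proof.
move=> hg; split=> t a x y.
  by rewrite fnlD scalerDl scalerA.
by rewrite hg scalerDr scalerA mulrC -scalerA.
Qed.

Lemma bilin_gf (F : fieldType) (n : nat) (c : 'cV[F]_n) (g : 'rV[F]_n -> 'rV[F]_n) :
  (forall a x y, g (a *: x + y) = a *: g x + g y) ->
  bilin (fun x y => fnl c y *: g x).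
Proof.
move=> hg; split=> t a x y.
  by rewrite hg scalerDr scalerA mulrC -scalerA.
by rewrite fnlD scalerDl scalerA.
Qed.

Lemma bilin_fbr (F : fieldType) (n : nat) (br : 'rV[F]_n -> 'rV[F]_n -> 'rV[F]_n)
  (H : is_lie_bracket br) (c : 'cV[F]_n) (z : 'rV[F]_n) :
  bilin (fun x y => fnl c (br x y) *: z).
Proof.
split=> t a x y.
  by rewrite (brDl H) fnlD scalerDl scalerA.
by rewrite (brDr H) fnlD scalerDl scalerA.
Qed.

Lemma bilin_add3 (F : fieldType) (n m : nat) (G1 G2 G3 : 'rV[F]_n -> 'rV[F]_n -> 'rV[F]_m) :
  bilin G1 -> bilin G2 -> bilin G3 -> bilin (fun x y => G1 x y + G2 x y + G3 x y).
Proof.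
move=> [l1 r1] [l2 r2] [l3 r3]; split=> t a x y.
  by rewrite l1 l2 l3 !scalerDr (addrACA (a *: G1 x t)) (addrACA (a *: G1 x t + a *: G2 x t)).
by rewrite r1 r2 r3 !scalerDr (addrACA (a *: G1 t x)) (addrACA (a *: G1 t x + a *: G2 t x)).
Qed.

From mathcomp Require Import zify.

Theorem theorem4p1 (C : numClosedFieldType) (n : nat)
    (br : 'rV[C]_n -> 'rV[C]_n -> 'rV[C]_n) :
  (3 <= n)%N -> is_lie_bracket br -> filiform br ->
  exists D : 'M[C]_n, local_automorphism br D /\ ~ lie_automorphism br D.
Proof.
move=> hn H [_ Hfil].
have rk k : (1 <= k <= n.-1)%N -> \rank (lcs br k) = (n - k - 1)%N := Hfil k.
have top0 u : (u <= lcs br (n.-1))%MS -> u = 0.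
  have /eqP : \rank (lcs br n.-1) = 0%N by rewrite rk; lia.
  by rewrite mxrank_eq0 => /eqP -> /submx0null.
have Zc z y : (z <= lcs br (n - 2))%MS -> br z y = 0 /\ br y z = 0.
  have e : (n - 2).+1 = n.-1 by lia.
  move=> hz; split; apply: top0; rewrite -e lcsS.
    exact: br_sub.
  exact: br_subr.
have ZW w y : (w <= lcs br (n - 3))%MS ->
    (br w y <= lcs br (n - 2))%MS /\ (br y w <= lcs br (n - 2))%MS.
  have e : (n - 3).+1 = (n - 2)%N by lia.
  by move=> hw; rewrite -e lcsS; split; [apply: br_sub | apply: br_subr].
set W := lcs br (n - 3).
have [i0 [j0 hij]] : exists i j, br (row i W) (delta_mx 0 j) != 0.
  case: (boolP [exists i, exists j, br (row i W) (delta_mx 0 j) != 0]).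
    by case/existsP=> i /existsP [j hj]; exists i, j.
  move/existsPn=> hno; exfalso.
  have : (lcs br (n - 2) <= (0 : 'M[C]_n))%MS.
    have e : (n - 3).+1 = (n - 2)%N by lia.
    rewrite -e lcsS; apply: bracket_le => i j.
    by move: (hno i) => /existsPn /(_ j) /negbNE /eqP ->; rewrite sub0mx.
  move/mxrankS; rewrite mxrank0 rk; lia.
set w0 := row i0 W; set e0 : 'rV[C]_n := delta_mx 0 j0.
have w0W : (w0 <= W)%MS by apply: row_sub.
set V := lcs br 1.
have hVW w v : (w <= W)%MS -> (v <= V)%MS -> br w v = 0.
  move=> hw hv.
  set M := \matrix_(k < n) br w (delta_mx 0 k).
  have hM y : y *m M = br w y := lin_mx (brDr H w) y.
  suff : (V <= kermx M)%MS.
    by move=> hVk; rewrite -hM; apply/sub_kermxP; apply: submx_trans hVk.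
  rewrite /V lcsS; apply: bracket_le => a b; apply/sub_kermxP; rewrite hM.
  have [_ _ _ J] := H.
  have := J w (row a (lcs br 0)) (delta_mx 0 b).
  have [h1 _] := ZW _ (row a (lcs br 0)) hw.
  have [_ h2] := ZW _ (delta_mx 0 b) hw.
  rewrite (proj2 (Zc _ _ h1)) (proj2 (Zc _ _ h2)) !addr0.
  done.
have z0nz : br w0 e0 != 0 by [].
have e0V : ~~ (e0 <= V)%MS by apply: contra z0nz => h; rewrite (hVW _ _ w0W h).
have rV : \rank V = (n - 2)%N by rewrite /V rk; lia.
set S1 := (V + e0)%MS.
have rS1 : \rank S1 = (n - 2).+1 by rewrite rank_add1 // rV.
have [j1 he1] := exists_e (S := S1) (ltac:(rewrite rS1; lia)).
set e1 : 'rV[C]_n := delta_mx 0 j1 in he1 *.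
have rS2 : \rank (S1 + e1)%MS = n by rewrite rank_add1 // rS1; lia.
have hdec x : exists v a b, (v <= V)%MS /\ x = v + a *: e0 + b *: e1.
  have : (x <= S1 + e1)%MS by apply: submx_full; rewrite /row_full rS2.
  case/sub_addsmxP=> [[p q] /= ->].
  have : (p *m S1 <= V + e0)%MS by apply: submxMl.
  case/sub_addsmxP=> [[p' q'] /= ->].
  exists (p' *m V), (q' 0 0), (q 0 0); split; first by apply: submxMl.
  by rewrite {1}[q']mx11_scalar {1}[q]mx11_scalar !mul_scalar_mx.
have [c1 [hc1S hc1e]] := functional he1.
set lam := fnl c1.
have lamV v : (v <= V)%MS -> lam v = 0.
  by move=> hv; apply: (fnl_sub hc1S); apply: submx_trans hv (addsmxSl _ _).
have lam0 : lam e0 = 0 by apply: (fnl_sub hc1S); apply: addsmxSr.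
have lam1 : lam e1 = 1 by rewrite /lam /fnl hc1e mxE.
have hbb : forall x, br x x = 0 by case: H.
have brV a b : (br a b <= V)%MS.
  by rewrite /V lcsS; apply: (br_sub H); exact: submx1.
set u := br e0 e1.
set L2 := lcs br 2.
have uL2 : ~~ (u <= L2)%MS.
  apply/negP=> hu.
  have : (V <= L2)%MS.
    rewrite /V lcsS; apply: bracket_le => a b.
    set G := fun x y => br x y *m cokermx L2.
    have hG : bilin G.
      by split=> t a' x y; rewrite /G ?(brDl H) ?(brDr H) mulmxDl scalemxAl.
    have G0 x y : G x y = 0.
      apply: (bil_vanish (V := V) (e0 := e0) (e1 := e1) hG.1 hG.2) => //.
      - by move=> v y' hv; apply/eqP; rewrite /G -submxE /L2 lcsS br_sub.
      - by move=> v y' hv; apply/eqP; rewrite /G -submxE /L2 lcsS br_subr.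
      - by rewrite /G hbb mul0mx.
      - by apply/eqP; rewrite /G -submxE.
      - by apply/eqP; rewrite /G (br_anti H) mulNmx oppr_eq0 -submxE.
      - by rewrite /G hbb mul0mx.
    by rewrite submxE; apply/eqP; exact: G0.
  move/mxrankS; rewrite rV /L2 rk; lia.
have [cm [hcmS hcmu]] := functional uL2.
set mu := fnl cm.
have muL2 v : (v <= L2)%MS -> mu v = 0 by move=> hv; apply: (fnl_sub hcmS).
have mu1 : mu u = 1 by rewrite /mu /fnl hcmu mxE.
have two0 : (2 : C) != 0 by rewrite pnatr_eq0.
have [w [wW [lamw zn]]] : exists w, [/\ (w <= W)%MS, lam w != -1 & br e0 w != 0].
  have e0w0 : br e0 w0 != 0 by rewrite (br_anti H) oppr_eq0.
  case: (eqVneq (lam w0) (-1)) => hl; last by exists w0.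
  exists (2 *: w0); split.
  - by rewrite scalemx_sub.
  - rewrite /lam fnlZ -/lam hl mulrN1 eqr_opp.
    by apply/eqP => /eqP; rewrite (eqr_nat C 2 1).
  - by rewrite (brZr H) scaler_eq0 negb_or two0.
set z := br e0 w.
have zZ : (z <= lcs br (n - 2))%MS by have [] := ZW w e0 wW.
have zc y : br z y = 0 /\ br y z = 0 := Zc z y zZ.
have zV : (z <= V)%MS by apply: submx_trans zZ _; apply: lcs_mono => //; lia.
have lamz : lam z = 0 := lamV z zV.
set G := fun x y => mu (br x y) *: z + lam x *: br y w + lam y *: br w x.
have hG : bilin G.
  apply: bilin_add3; first exact: bilin_fbr.
    by apply: bilin_fg => a x y; rewrite (brDl H).
  by apply: bilin_gf => a x y; rewrite (brDr H).
have key x y : G x y = 0.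
  apply: (bil_vanish (V := V) (e0 := e0) (e1 := e1) hG.1 hG.2) => //.
  - move=> v y' hv; rewrite /G (lamV v hv) scale0r addr0 (hVW _ _ wW hv) scaler0 addr0.
    by rewrite muL2 ?scale0r // /L2 lcsS br_sub.
  - move=> v y' hv; rewrite /G (lamV v hv) scale0r addr0 (br_anti H w v) (hVW _ _ wW hv) oppr0 scaler0 addr0.
    by rewrite muL2 ?scale0r // /L2 lcsS br_subr.
  - by rewrite /G hbb lam0 !scale0r !addr0 muL2 ?sub0mx // scale0r.
  - by rewrite /G -/u mu1 lam0 lam1 scale0r addr0 !scale1r (br_anti H e0 w) addrN.
  - rewrite /G (br_anti H e0 e1) -/u lam0 lam1 scale0r addr0 !scale1r.
    by rewrite -scaleN1r /mu fnlZ -/mu mu1 mulr1 scaleN1r addNr.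
  - by rewrite /G hbb lam1 !scale1r muL2 ?sub0mx // scale0r add0r (br_anti H e1 w) addrN.
have fnl0 (c : 'cV[C]_n) : fnl c 0 = 0 by rewrite /fnl mul0mx mxE.
have muz : mu z = lam w.
  have := key e0 w; rewrite /G -/z hbb lam0 scale0r addr0 (br_anti H e0 w) -/z.
  rewrite scalerN -scaleNr -scalerDl => /eqP; rewrite scaler_eq0 (negbTE zn) orbF.
  by rewrite addr_eq0 opprK => /eqP.
have brc x y a b : br (x + a *: z) (y + b *: z) = br x y.
  rewrite !(brAl H) !(brAr H) !(brZl H) !(brZr H).
  by rewrite !(proj1 (zc _)) !(proj2 (zc _)) !scaler0 !addr0.
have lw1 : 1 + lam w != 0 by rewrite addrC addr_eq0.
set Phi := 1%:M + (c1 *m w + cm *m z).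
have hPhi x : x *m Phi = x + lam x *: w + mu x *: z.
  by rewrite /Phi mulmxDr mulmx1 mulmxDr !mul_rank1' addrA.
set D := 1%:M + cm *m z.
have hD x : x *m D = x + mu x *: z by rewrite /D mulmxDr mulmx1 mul_rank1'.
exists D; split; last first.
  move=> [_ hom]; have := hom e0 e1; rewrite !hD brc -/u mu1 scale1r.
  move/eqP; rewrite -subr_eq0 addrAC subrr add0r.
  by rewrite (negbTE zn).
move=> x; case: (boolP (x <= V)%MS) => hx.
  exists Phi; split; last by rewrite hPhi hD lamV // scale0r addr0.
  split.
    apply: unit_of_inj => y; rewrite hPhi => hy.
    have h1 := congr1 lam hy.
    rewrite /lam !fnlA !fnlZ fnl0 -/lam lamz mulr0 addr0 in h1.
    have ly0 : lam y = 0.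
      move/eqP: h1; rewrite -{1}[lam y]mulr1 -mulrDr mulf_eq0 (negbTE lw1) orbF.
      by move/eqP.
    rewrite ly0 scale0r addr0 in hy.
    have h2 := congr1 mu hy.
    rewrite /mu fnlA fnlZ fnl0 -/mu muz in h2.
    have my0 : mu y = 0.
      move/eqP: h2; rewrite -{1}[mu y]mulr1 -mulrDr mulf_eq0 (negbTE lw1) orbF.
      by move/eqP.
    by rewrite my0 scale0r addr0 in hy.
  move=> a b; rewrite !hPhi (lamV _ (brV a b)) scale0r addr0 brc.
  have hk : mu (br a b) *: z = - (lam a *: br b w) - lam b *: br w a.
    by have := key a b; rewrite /G => /eqP; rewrite -addrA addr_eq0 opprD => /eqP.
  rewrite hk !(brAl H) !(brAr H) !(brZl H) !(brZr H) hbb !scaler0 addr0.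
  rewrite (br_anti H w a) (br_anti H b w) !scalerN.
  by rewrite -!addrA; congr (_ + _); rewrite addrC.
have [cx [hcxV hcxx]] := functional hx.
set fx := fnl cx.
have fxx : fx x = 1 by rewrite /fx /fnl hcxx mxE.
have fxV v : (v <= V)%MS -> fx v = 0 by move=> hv; apply: (fnl_sub hcxV).
set Psi := 1%:M + cx *m (mu x *: z).
have hPsi y : y *m Psi = y + fx y *: (mu x *: z).
  by rewrite /Psi mulmxDr mulmx1 mul_rank1'.
exists Psi; split; last by rewrite hPsi hD fxx scale1r.
split.
  apply: unit_of_inj => y; rewrite hPsi => hy.
  have h1 := congr1 fx hy.
  rewrite /fx fnlA !fnlZ fnl0 -/fx (fxV z zV) !mulr0 addr0 in h1.
  by rewrite h1 scale0r addr0 in hy.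
move=> a b; rewrite !hPsi (fxV _ (brV a b)) scale0r addr0 !scalerA.
by rewrite brc.
Qed.
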